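(* Let $R\in\mathbb R$ and let $f:[0,R)\to\mathbb R$ be continuously differentiable and satisfy (h1) $f(0)>0$, $f'(0)=-1$; (h2) $f'$ is strictly increasing and convex; (h3) $f(t)<0$ for some $t\in(0,R)$. Let $t_*:=\min f^{-1}(\{0\})$, $\bar\tau:=\sup\{t\in[0,R):f(t)<0\}$, $\bar t:=\sup\{t\in[0,R):f'(t)<0\}$, and \[\kappa:=\sup_{0<t<R}\frac{-f(t)}{t},\qquad \lambda:=\sup\{t\in[0,R):\kappa+f'(t)<0\},\qquad\Theta:=\frac{\kappa}{2-\kappa}.\] Then $0<\kappa<1$, $0<\Theta<1$, $t_*<\lambda\le\bar t\le\bar\tau$, $f'(t)+\kappa<0$ for all $t\in[0,\lambda)$, and \[\inf_{0\le t<R}\big(f(t)+\kappa t\big)=\lim_{t\to\lambda^-}\big(f(t)+\kappa t\big)=0.\] *)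

(* Defs.v *)
From Stdlib Require Import Reals.
From Coquelicot Require Export Coquelicot.
Open Scope R_scope.

Definition C1_on_0R (f f' : R -> R) (Rad : R) : Prop :=
  (forall t, 0 < t < Rad -> is_derive f t (f' t)) /\
  filterlim (fun h => (f h - f 0) / h) (at_right 0) (locally (f' 0)) /\
  (forall t, 0 < t < Rad -> continuous f' t) /\
  filterlim f' (at_right 0) (locally (f' 0)).

Definition strictly_increasing_on_0R (g : R -> R) (Rad : R) : Prop :=
  forall x y, 0 <= x < Rad -> 0 <= y < Rad -> x < y -> g x < g y.

Definition convex_on_0R (g : R -> R) (Rad : R) : Prop :=
  forall x y a, 0 <= x < Rad -> 0 <= y < Rad -> 0 <= a <= 1 ->
    g (a * x + (1 - a) * y) <= a * g x + (1 - a) * g y.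

Definition tau_bar (f : R -> R) (Rad : R) : Rbar :=
  Lub_Rbar (fun t => 0 <= t < Rad /\ f t < 0).

Definition t_bar (f' : R -> R) (Rad : R) : Rbar :=
  Lub_Rbar (fun t => 0 <= t < Rad /\ f' t < 0).

Definition kappa (f : R -> R) (Rad : R) : Rbar :=
  Lub_Rbar (fun y => exists t, 0 < t < Rad /\ y = - f t / t).

Definition lambda (f f' : R -> R) (Rad : R) : Rbar :=
  Lub_Rbar (fun t => 0 <= t < Rad /\ real (kappa f Rad) + f' t < 0).

Definition Theta (f : R -> R) (Rad : R) : R :=
  real (kappa f Rad) / (2 - real (kappa f Rad)).

Definition inf_shifted (f : R -> R) (Rad : R) : Rbar :=
  Glb_Rbar (fun y => exists t, 0 <= t < Rad /\ y = f t + real (kappa f Rad) * t).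

(* Main.v *)
Require Import Defs.
From Stdlib Require Import Reals Lra Classical.
From Coquelicot Require Import Coquelicot.
Open Scope R_scope.
Lemma ball_R x e y : ball x e y <-> Rabs (y - x) < e.
Proof. reflexivity. Qed.

Lemma at_right_eps (h : R -> R) x L : filterlim h (at_right x) (locally L) ->
  forall eps, 0 < eps -> exists d, 0 < d /\ forall y, x < y < x + d -> Rabs (h y - L) < eps.
Proof.
  intros H eps Heps.
  destruct (proj1 (filterlim_locally h L) H (mkposreal eps Heps)) as [d Hd].
  exists d. split. apply cond_pos. intros y Hy. apply (Hd y).
  apply ball_R. rewrite Rabs_right; lra. lra.
Qed.

Lemma cont_eps (h : R -> R) x : continuity_pt h x ->
  forall eps, 0 < eps -> exists d, 0 < d /\ forall y, Rabs (y - x) < d -> Rabs (h y - h x) < eps.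
Proof.
  intros H eps Heps. apply continuity_pt_filterlim in H.
  destruct (proj1 (filterlim_locally h (h x)) H (mkposreal eps Heps)) as [d Hd].
  exists d. split. apply cond_pos. intros y Hy. apply (Hd y). apply ball_R. exact Hy.
Qed.

Lemma MVT_open (h h' : R -> R) a b : a < b ->
  (forall x, a < x < b -> is_derive h x (h' x)) ->
  (forall x, a <= x <= b -> continuity_pt h x) ->
  exists c, a < c < b /\ h b - h a = h' c * (b - a).
Proof.
  intros Hab Hd Hc.
  set (M := (h b - h a) / (b - a) + 1).
  set (df := fun x => if Rlt_dec a x then (if Rlt_dec x b then h' x else M) else M).
  destruct (MVT_gen h a b df) as [c [Hc1 Hc2]].
  - rewrite Rmin_left, Rmax_right by lra. intros x Hx. unfold df.
    destruct (Rlt_dec a x); [|lra]. destruct (Rlt_dec x b); [|lra]. now apply Hd.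
  - rewrite Rmin_left, Rmax_right by lra. exact Hc.
  - rewrite Rmin_left, Rmax_right in Hc1 by lra. unfold df in Hc2.
    destruct (Rlt_dec a c); destruct (Rlt_dec c b); try (exists c; split; [lra|exact Hc2]);
    exfalso; unfold M in Hc2; field_simplify in Hc2; try lra;
    assert (h b - h a = h b - h a + (b - a)) by (rewrite Hc2; field; lra); lra.
Qed.

Theorem proposition2p4 (Rad : R) (f f' : R -> R) :
  C1_on_0R f f' Rad ->
  (* (h1) *) f 0 > 0 -> f' 0 = -1 ->
  (* (h2) *) strictly_increasing_on_0R f' Rad -> convex_on_0R f' Rad ->
  (* (h3) *) (exists t, 0 < t < Rad /\ f t < 0) ->
  Rbar_lt (Finite 0) (kappa f Rad) /\ Rbar_lt (kappa f Rad) (Finite 1) /\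
  0 < Theta f Rad < 1 /\
  (exists tstar,
      (0 <= tstar < Rad /\ f tstar = 0 /\
       (forall t, 0 <= t < Rad -> f t = 0 -> tstar <= t)) /\
      Rbar_lt (Finite tstar) (lambda f f' Rad)) /\
  Rbar_le (lambda f f' Rad) (t_bar f' Rad) /\
  Rbar_le (t_bar f' Rad) (tau_bar f Rad) /\
  (forall t, 0 <= t -> Rbar_lt (Finite t) (lambda f f' Rad) ->
      f' t + real (kappa f Rad) < 0) /\
  inf_shifted f Rad = Finite 0 /\
  filterlim (fun t => f t + real (kappa f Rad) * t)
            (at_left (real (lambda f f' Rad))) (locally 0).
Proof.
  intros [HD [HQ [HC' HR']]] Hf0 Hf'0 Hinc _ [t0 [Ht0 Hft0]].
  assert (HRad : 0 < Rad) by lra.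
  set (F := fun x => f (Rmax 0 x)).
  assert (FE : forall x, 0 <= x -> F x = f x).
  { intros x Hx. unfold F. now rewrite Rmax_right. }
  assert (FD : forall x, 0 < x < Rad -> is_derive F x (f' x)).
  { intros x Hx. apply is_derive_ext_loc with f; [|now apply HD].
    exists (mkposreal x (proj1 Hx)). intros y Hy. apply ball_R in Hy. simpl in Hy.
    unfold F. rewrite Rmax_right; [reflexivity|].
    assert (Hy2 : Rabs (y - x) < x) by exact Hy. apply Rabs_def2 in Hy2. lra. }
  assert (FC : forall x, 0 <= x < Rad -> continuity_pt F x).
  { intros x Hx. destruct (Rle_lt_or_eq_dec 0 x (proj1 Hx)) as [Hx0|Hx0].
    - apply continuity_pt_filterlim.
      assert (Hc := ex_derive_continuous F x (ex_intro _ _ (FD x ltac:(lra)))).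
      exact Hc.
    - subst x. apply continuity_pt_filterlim. apply filterlim_locally.
      intros eps.
      destruct (at_right_eps _ _ _ HQ 1 Rlt_0_1) as [d [Hd Hd']].
      assert (He := cond_pos eps).
      assert (He2 : 0 < eps/2) by lra.
      exists (mkposreal (Rmin d (eps/2)) (Rmin_pos _ _ Hd He2)).
      intros y Hy. assert (Hy2 : Rabs (y - 0) < Rmin d (eps/2)) by exact Hy.
      change (Rabs (F y - F 0) < eps).
      assert (Hm1 := Rmin_l d (eps/2)). assert (Hm2 := Rmin_r d (eps/2)).
      rewrite Rminus_0_r in Hy2. apply Rabs_def2 in Hy2.
      unfold F. rewrite (Rmax_left 0 0) by lra.
      destruct (Rle_dec y 0) as [Hy0|Hy0].
      + rewrite Rmax_left by lra. rewrite Rminus_diag, Rabs_R0. apply cond_pos.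
      + rewrite Rmax_right by lra.
        specialize (Hd' y ltac:(lra)). rewrite Hf'0 in Hd'.
        set (q := (f y - f 0) / y) in Hd'.
        assert (Hq : f y - f 0 = q * y) by (unfold q; field; lra).
        apply Rabs_def2 in Hd'. apply Rabs_def1; nra. }
  assert (MV : forall a b, 0 <= a -> a < b -> b < Rad ->
     exists c, a < c < b /\ f b - f a = f' c * (b - a)).
  { intros a b Ha Hab Hb. rewrite <- (FE a), <- (FE b) by lra.
    apply MVT_open; auto. intros x Hx; apply FD; lra. intros x Hx; apply FC; lra. }
  assert (LB : forall t, 0 < t < Rad -> f t > f 0 - t).
  { intros t Ht. destruct (MV 0 t) as [c [Hc Hc']]; try lra.
    assert (f' 0 < f' c) by (apply Hinc; lra). nra. }
  assert (Hk : exists k, kappa f Rad = Finite k /\ 0 < k /\ k < 1 /\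
     (forall t, 0 < t < Rad -> - f t / t <= k) /\
     (forall e, 0 < e -> exists t, 0 < t < Rad /\ k - e < - f t / t)).
  { unfold kappa. set (Ek := fun y => exists t, 0 < t < Rad /\ y = - f t / t).
    destruct (Lub_Rbar_correct Ek) as [Hub Hlub].
    set (B := 1 - f 0 / Rad).
    assert (HB : is_ub_Rbar Ek B).
    { intros y [t [Ht ->]]. simpl. apply Rle_div_l; [lra|].
      assert (f 0 * t / Rad <= f 0).
      { apply Rle_div_l; [lra|]. nra. }
      specialize (LB t Ht). unfold B.
      assert (f 0 / Rad * t = f 0 * t / Rad) by (field; lra). nra. }
    assert (Hy0 : Ek (- f t0 / t0)) by (exists t0; auto).
    assert (Hy0p : 0 < - f t0 / t0) by (apply Rdiv_lt_0_compat; lra).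
    assert (HBl : B < 1).
    { unfold B. assert (0 < f 0 / Rad) by (apply Rdiv_lt_0_compat; lra). lra. }
    assert (H1 := Hlub B HB). assert (H2 := Hub _ Hy0).
    revert Hub Hlub H1 H2. destruct (Lub_Rbar Ek) as [k| |]; intros Hub Hlub H1 H2;
      simpl in H1, H2; try contradiction.
    exists k. split; [reflexivity|]. split; [lra|]. split; [lra|]. split.
    - intros t Ht. apply (Hub (- f t / t)). exists t; auto.
    - intros e He. apply NNPP. intros Hn.
      assert (Hu : is_ub_Rbar Ek (k - e)).
      { intros y [t [Ht ->]]. simpl. apply Rnot_lt_le. intros Hlt. apply Hn. exists t. auto. }
      specialize (Hlub _ Hu). simpl in Hlub. lra. }
  destruct Hk as [k [Hkap [Hk0 [Hk1 [Hkub Hkap2]]]]].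
  unfold Theta, inf_shifted. rewrite Hkap. simpl.
  assert (Gnn : forall t, 0 <= t < Rad -> 0 <= f t + k * t).
  { intros t Ht. destruct (Rle_lt_or_eq_dec 0 t (proj1 Ht)) as [Ht0'|Ht0'].
    - specialize (Hkub t ltac:(lra)).
      assert (- f t / t * t = - f t) by (field; lra). nra.
    - subst t. lra. }
  assert (Approx : forall e, 0 < e -> exists s, 0 < s < Rad /\ f s + k * s < e).
  { intros e He. destruct (Hkap2 (e / Rad)) as [s [Hs Hs']].
    apply Rdiv_lt_0_compat; lra.
    exists s. split; auto.
    assert (- f s / s * s = - f s) by (field; lra).
    assert (e / Rad * s < e).
    { apply (Rmult_lt_reg_r Rad); [lra|]. assert (e / Rad * s * Rad = e * s) by (field; lra). nra. }
    nra. }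
  set (S := fun t => 0 <= t < Rad /\ k + f' t < 0).
  assert (HlamS : lambda f f' Rad = Lub_Rbar S) by (unfold lambda; rewrite Hkap; reflexivity).
  rewrite HlamS.
  assert (S0 : S 0) by (split; lra).
  assert (Hl : exists l, Lub_Rbar S = Finite l /\ 0 <= l <= Rad /\
            (forall t, S t -> t <= l) /\ (forall b, is_ub_Rbar S b -> Rbar_le l b)).
  { destruct (Lub_Rbar_correct S) as [Hub Hlub].
    assert (HR : is_ub_Rbar S Rad) by (intros y [Hy _]; simpl; lra).
    assert (H1 := Hlub _ HR). assert (H2 := Hub _ S0).
    revert Hub Hlub H1 H2. destruct (Lub_Rbar S) as [l| |]; intros Hub Hlub H1 H2;
      simpl in H1, H2; try contradiction.
    exists l. repeat split; try lra. intros t Ht. exact (Hub t Ht). exact Hlub. }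
  destruct Hl as [l [HlE [Hl0 [HlS Hllub]]]]. rewrite HlE. simpl.
  assert (Below : forall t, 0 <= t -> t < l -> k + f' t < 0).
  { intros t Ht Htl. apply NNPP. intros Hn.
    assert (Hu : is_ub_Rbar S t).
    { intros y Hy. simpl. apply Rnot_lt_le. intros Hlt. apply Hn.
      destruct Hy as [Hy1 Hy2]. assert (f' t < f' y) by (apply Hinc; lra). lra. }
    specialize (Hllub _ Hu). simpl in Hllub. lra. }
  assert (Open : forall x, 0 <= x < Rad -> k + f' x < 0 -> exists y, x < y < Rad /\ k + f' y < 0).
  { intros x Hx Hxk.
    assert (Hd : exists d, 0 < d /\ forall y, x < y < x + d -> Rabs (f' y - f' x) < - (k + f' x)).
    { destruct (Rle_lt_or_eq_dec 0 x (proj1 Hx)) as [Hx0|Hx0].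
      - assert (Hc : continuity_pt f' x) by (apply continuity_pt_filterlim; apply HC'; lra).
        destruct (cont_eps _ _ Hc (- (k + f' x))) as [d [Hd Hd']]; [lra|].
        exists d. split; auto. intros y Hy. apply Hd'. rewrite Rabs_right; lra.
      - subst x. apply at_right_eps; auto. lra. }
    destruct Hd as [d [Hd Hd']].
    set (y := x + Rmin d (Rad - x) / 2).
    assert (Hm1 := Rmin_l d (Rad - x)). assert (Hm2 := Rmin_r d (Rad - x)).
    assert (Hm3 : 0 < Rmin d (Rad - x)) by (apply Rmin_pos; lra).
    exists y. unfold y. split; [lra|].
    specialize (Hd' (x + Rmin d (Rad - x) / 2) ltac:(lra)). apply Rabs_def2 in Hd'. lra. }
  assert (Gl : l < Rad -> 0 < l /\ f l + k * l = 0).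
  { intros HlR.
    assert (notS : 0 <= k + f' l).
    { apply Rnot_lt_le. intros Hlt. destruct (Open l ltac:(lra) Hlt) as [y [Hy Hy']].
      assert (y <= l) by (apply HlS; split; lra). lra. }
    assert (Gmin : forall s, 0 <= s < Rad -> f l + k * l <= f s + k * s).
    { intros s Hs. destruct (Rtotal_order s l) as [Hsl|[Hsl|Hsl]].
      - destruct (MV s l) as [c [Hc Hc']]; try lra.
        assert (k + f' c < 0) by (apply Below; lra). nra.
      - subst; lra.
      - destruct (MV l s) as [c [Hc Hc']]; try lra.
        assert (f' l < f' c) by (apply Hinc; lra). nra. }
    assert (G0 := Gnn l ltac:(lra)).
    assert (Gz : f l + k * l = 0).
    { apply Rle_antisym; auto. apply Rnot_lt_le. intros Hpos.
      destruct (Approx _ Hpos) as [s [Hs Hs']]. specialize (Gmin s ltac:(lra)). lra. }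
    split; auto. destruct (Rle_lt_or_eq_dec 0 l (proj1 Hl0)) as [H|H]; auto.
    subst l. lra. }
  assert (Hu : exists u, 0 < u < Rad /\ f u < 0 /\ u <= l).
  { destruct (Rle_lt_or_eq_dec l Rad (proj2 Hl0)) as [HlR|HlR].
    - destruct (Gl HlR) as [Hlp Hg]. exists l. split; [lra|]. split; [nra|lra].
    - exists t0. split; [lra|]. split; [lra|lra]. }
  assert (IVT0 : forall u, 0 < u < Rad -> f u < 0 -> exists z, 0 < z < u /\ f z = 0).
  { intros u Hu1 Hu2.
    destruct (Ranalysis5.IVT_interv (fun x => - F x) 0 u) as [z [Hz Hz']].
    - intros a Ha. apply (continuity_pt_opp F). apply FC; lra.
    - lra.
    - rewrite FE; lra.
    - rewrite FE; lra.
    - rewrite FE in Hz' by lra. exists z. split; [|lra].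
      destruct (Req_dec z 0) as [E|E]. subst; lra.
      destruct (Req_dec z u) as [E'|E']. subst; lra. lra. }
  set (Z := fun t => 0 <= t < Rad /\ f t = 0).
  assert (Hts : exists m, (0 <= m < Rad /\ f m = 0 /\ (forall t, 0 <= t < Rad -> f t = 0 -> m <= t)) /\ m < l).
  { destruct Hu as [u [Hu1 [Hu2 Hu3]]].
    destruct (IVT0 u Hu1 Hu2) as [z [Hz Hz']].
    destruct (Glb_Rbar_correct Z) as [Hlb Hglb].
    assert (H0 : is_lb_Rbar Z 0) by (intros y [Hy _]; simpl; lra).
    assert (H1 := Hglb _ H0). assert (H2 := Hlb z ltac:(split; [lra|exact Hz'])).
    revert Hlb Hglb H1 H2. destruct (Glb_Rbar Z) as [m| |]; intros Hlb Hglb H1 H2;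
      simpl in H1, H2; try contradiction.
    assert (Hmin : forall t, 0 <= t < Rad -> f t = 0 -> m <= t).
    { intros t Ht Hft. exact (Hlb t (conj Ht Hft)). }
    exists m. split; [|lra]. split; [lra|]. split; auto.
    destruct (Rtotal_order (f m) 0) as [Hneg|[Hz0|Hpos]]; auto.
    - exfalso. assert (Hm0 : 0 < m).
      { destruct (Rle_lt_or_eq_dec 0 m H1) as [H|H]; auto. subst m. lra. }
      destruct (IVT0 m ltac:(lra) Hneg) as [w [Hw Hw']].
      specialize (Hmin w ltac:(lra) Hw'). lra.
    - exfalso. assert (Hc := FC m ltac:(lra)).
      destruct (cont_eps _ _ Hc (f m)) as [d [Hd Hd']]; [lra|].
      assert (Hnl : ~ is_lb_Rbar Z (m + d)).
      { intros Hl'. specialize (Hglb _ Hl'). simpl in Hglb. lra. }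
      apply Hnl. intros w [Hw Hfw]. simpl. apply Rnot_lt_le. intros Hlt.
      specialize (Hmin w Hw Hfw).
      specialize (Hd' w ltac:(rewrite Rabs_right; lra)).
      rewrite FE, FE in Hd' by lra. apply Rabs_def2 in Hd'. lra. }
  assert (H2k : 0 < 2 - k) by lra.
  split; [lra|]. split; [lra|]. split.
  { split. apply Rdiv_lt_0_compat; lra. apply Rlt_div_l; lra. }
  split; [exact Hts|]. split.
  { change (Rbar_le l (t_bar f' Rad)). apply Hllub. unfold t_bar.
    intros y [Hy Hy']. apply (proj1 (Lub_Rbar_correct _)). split; [lra|lra]. }
  split.
  { unfold t_bar, tau_bar. apply (proj2 (Lub_Rbar_correct _)).
    intros t [Ht Ht'].
    assert (Hs : exists s, t <= s /\ 0 <= s < Rad /\ f s < 0).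
    { destruct (Rle_lt_dec t t0) as [H|H].
      - exists t0. split; [lra|]. split; lra.
      - exists t. split; [lra|]. split; [lra|].
        destruct (MV t0 t) as [c [Hc Hc']]; try lra.
        assert (f' c < f' t) by (apply Hinc; lra). nra. }
    destruct Hs as [s [Hts' [Hs Hs']]].
    apply Rbar_le_trans with (Finite s). simpl; lra.
    apply (proj1 (Lub_Rbar_correct _)). split; auto. }
  split.
  { intros t Ht Htl. specialize (Below t Ht Htl). lra. }
  split.
  { apply is_glb_Rbar_unique. split.
    - intros y [t [Ht ->]]. simpl. apply Gnn; auto.
    - intros b Hb. destruct b as [b| |]; simpl.
      + apply Rnot_lt_le. intros Hbp. destruct (Approx b Hbp) as [s [Hs Hs']].
        specialize (Hb (f s + k * s) ltac:(exists s; split; [lra|reflexivity])).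
        simpl in Hb. lra.
      + specialize (Hb (f 0 + k * 0) ltac:(exists 0; split; [lra|reflexivity])).
        simpl in Hb. exact Hb.
      + exact I. }
  apply filterlim_locally. intros eps.
  assert (He := cond_pos eps).
  destruct (Approx eps He) as [s [Hs Hs']].
  destruct (Rlt_le_dec s l) as [Hsl|Hsl].
  - exists (mkposreal (l - s) ltac:(lra)). intros t Ht Htl.
    assert (Ht2 : Rabs (t - l) < l - s) by exact Ht.
    change (Rabs (f t + k * t - 0) < eps).
    apply Rabs_def2 in Ht2.
    destruct (MV s t) as [c [Hc Hc']]; try lra.
    assert (k + f' c < 0) by (apply Below; lra).
    assert (0 <= f t + k * t) by (apply Gnn; lra).
    rewrite Rminus_0_r, Rabs_right by lra. nra.
  - assert (HlR : l < Rad) by lra.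
    destruct (Gl HlR) as [Hlp Hg].
    assert (Hc : continuity_pt (fun t => F t + k * t) l).
    { apply continuity_pt_plus. apply FC; lra.
      apply continuity_pt_mult. apply continuity_pt_const. intros a b; reflexivity.
      apply continuity_pt_id. }
    destruct (cont_eps _ _ Hc eps He) as [d [Hd Hd']].
    exists (mkposreal (Rmin d l) (Rmin_pos _ _ Hd Hlp)). intros t Ht Htl.
    assert (Ht2 : Rabs (t - l) < Rmin d l) by exact Ht.
    assert (Hm1 := Rmin_l d l). assert (Hm2 := Rmin_r d l).
    change (Rabs (f t + k * t - 0) < eps).
    specialize (Hd' t ltac:(lra)). simpl in Hd'.
    apply Rabs_def2 in Ht2.
    rewrite FE, FE in Hd' by lra. rewrite Hg in Hd'. rewrite Rminus_0_r in Hd' |- *. exact Hd'.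
Qed.
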